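(* Let $G$ be a cyclic group of order $n\ge 4$. Then $\{2,n-2,n-1\}\in\mathcal L(G)$.
   Context: For a finite abelian group $G$, a sequence over $G$ is an element of the free abelian monoid $\mathcal F(G)$ with basis $G$ (a finite unordered list of elements of $G$, repetitions allowed). $\mathcal B(G)$ is the monoid of zero-sum sequences over $G$ (including the empty sequence). An atom is a minimal zero-sum sequence, i.e. a nonempty zero-sum sequence that is not a product of two nonempty zero-sum sequences. For $B\in\mathcal B(G)$, $\mathsf L(B)=\{k\in\mathbb N_0: B \text{ is a product of } k \text{ atoms}\}$, and $\mathcal L(G)=\{\mathsf L(B):B\in\mathcal B(G)\}$. *)

(* Defs.v *)
From mathcomp Require Import all_boot all_order all_algebra.
Set Implicit Arguments. Unset Strict Implicit. Unset Printing Implicit Defensive.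
Import GRing.Theory.
Local Open Scope ring_scope.

(* Sequences over an (additive) abelian group T are finite unordered lists:
   we represent them by [seq T] and identify sequences up to permutation
   ([perm_eq]); the monoid product of sequences is concatenation. *)

Definition zero_sum (T : zmodType) (S : seq T) : Prop := \sum_(x <- S) x = 0.

Definition atom (T : zmodType) (A : seq T) : Prop :=
  A <> [::] /\ zero_sum A /\
  ~ (exists S1 S2 : seq T, S1 <> [::] /\ S2 <> [::] /\ zero_sum S1 /\
       zero_sum S2 /\ perm_eq A (S1 ++ S2)).

Definition in_lengths (T : zmodType) (B : seq T) (k : nat) : Prop :=
  exists F : seq (seq T),
    size F = k /\ (forall A, A \in F -> atom A) /\ perm_eq B (flatten F).

Definition in_system_of_sets (T : zmodType) (X : nat -> Prop) : Prop :=
  exists B : seq T, zero_sum B /\ forall k, in_lengths B k <-> X k.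

(* Main.v *)
Require Import Defs.
From mathcomp Require Import all_boot all_order all_algebra.
From mathcomp Require Import zify ring.
Set Implicit Arguments. Unset Strict Implicit. Unset Printing Implicit Defensive.
Import GRing.Theory.
Local Open Scope ring_scope.

Lemma sum_perm (T : zmodType) (s t : seq T) : perm_eq s t ->
  \sum_(x <- s) x = \sum_(x <- t) x.
Proof. by move=> H; apply: perm_big. Qed.

Lemma atom_split (T : zmodType) (A S1 S2 : seq T) : atom A ->
  perm_eq A (S1 ++ S2) -> zero_sum S1 -> S1 = [::] \/ S2 = [::].
Proof.
move=> [_ [zA nA]] P z1.
case: S1 P z1 => [|x1 S1] P z1; first by left.
case: S2 P => [|x2 S2] P; first by right.
exfalso; apply: nA; exists (x1 :: S1), (x2 :: S2); do 4!(split => //).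
move: zA; rewrite /zero_sum (sum_perm P) big_cat /=.
by move: z1; rewrite /zero_sum => ->; rewrite add0r.
Qed.

Lemma atom_small (T : zmodType) (A : seq T) :
  (forall x, x \in A -> x != 0) -> A <> [::] -> (size A <= 3)%N -> zero_sum A ->
  atom A.
Proof.
move=> nz ne sz zA; do 2!(split => //).
move=> [S1 [S2 [n1 [n2 [z1 [z2 P]]]]]].
have sz' := perm_size P; rewrite size_cat in sz'.
have key : forall S, zero_sum S -> size S = 1%N -> {subset S <= A} -> False.
  move=> [|x [|y S]] //= zS _ sub.
  have xA : x \in A by apply: sub; rewrite inE.
  move: zS; rewrite /zero_sum big_cons big_nil addr0 => x0.
  by move: (nz x xA); rewrite x0 eqxx.
case: S1 n1 z1 P sz' => [|x1 [|y1 S1]] // _ z1 P sz'.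
  apply: (key [:: x1]) => // y yin; by rewrite (perm_mem P) mem_cat yin.
case: S2 n2 z2 P sz' => [|x2 [|y2 S2]] // _ z2 P sz'.
  apply: (key [:: x2]) => // y yin; by rewrite (perm_mem P) mem_cat yin orbT.
move: sz sz'; rewrite (perm_size P) /=; lia.
Qed.

Lemma atom_neg (T : zmodType) (A : seq T) : atom A -> atom (map -%R A).
Proof.
move=> aA; have [ne [zA nA]] := aA.
split; first by case: A ne {aA zA nA}.
split; first by rewrite /zero_sum big_map sumrN zA oppr0.
move=> [S1 [S2 [n1 [n2 [z1 [z2 P]]]]]].
have P' : perm_eq A (map -%R S1 ++ map -%R S2).
  by rewrite -map_cat -[A](mapK opprK); apply: perm_map.
have z1' : zero_sum (map -%R S1) by rewrite /zero_sum big_map sumrN z1 oppr0.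
case: (atom_split aA P' z1') => /(congr1 size); rewrite size_map.
  by case: S1 n1 {z1 P P' z1'}.
by case: S2 n2 {z2 P P' z1'}.
Qed.

Lemma sum_nseq (T : zmodType) k (a : T) : \sum_(x <- nseq k a) x = a *+ k.
Proof. by elim: k => [|k IH]; rewrite ?big_nil //= big_cons IH mulrS. Qed.

Lemma natZ0 m k : ((k%:R : 'Z_(m.+4)) = 0) <-> (m.+4 %| k)%N.
Proof.
split=> [H|H].
  have := val_Zp_nat (isT : (1 < m.+4)%N) k; rewrite H /= => /esym/eqP.
  by rewrite -/(dvdn _ _).
by rewrite -Zp_nat_mod // (eqP H).
Qed.

Lemma natZ_inj m k l : (k < m.+4)%N -> (l < m.+4)%N ->
  (k%:R : 'Z_(m.+4)) = l%:R -> k = l.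
Proof.
move=> hk hl H.
have := val_Zp_nat (isT : (1 < m.+4)%N) k; rewrite H val_Zp_nat //.
by rewrite !modn_small.
Qed.

Lemma oppZ m k : (k <= m.+4)%N -> - (k%:R : 'Z_(m.+4)) = (m.+4 - k)%:R.
Proof.
move=> hk; apply/eqP; rewrite eq_sym -subr_eq0 opprK -natrD subnK //.
by apply/eqP/natZ0.
Qed.

Lemma oneZ m : (1 : 'Z_(m.+4)) = 1%:R. Proof. by []. Qed.

Lemma neqZ m k l : (k < m.+4)%N -> (l < m.+4)%N -> k <> l ->
  (k%:R : 'Z_(m.+4)) != l%:R.
Proof. by move=> hk hl kl; apply/eqP => /natZ_inj; auto. Qed.

Lemma em1Z m : (-1 : 'Z_(m.+4)) = (m.+3)%:R.
Proof. by rewrite -[1 in LHS]/(1%:R) oppZ. Qed.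
Lemma em2Z m : (- (2%:R) : 'Z_(m.+4)) = (m.+2)%:R.
Proof. by rewrite oppZ. Qed.

Lemma dist m : let T := 'Z_(m.+4) in
  [/\ (1 : T) != -1, (1 : T) != 2%:R, (1 : T) != -(2%:R),
      (-1 : T) != 2%:R & (-1 : T) != -(2%:R)].
Proof.
rewrite /= em1Z em2Z -[1 : 'Z_(m.+4)]/(1%:R).
by split; try (apply: neqZ; lia).
Qed.

Lemma nzZ m : let T := 'Z_(m.+4) in
  [/\ (1 : T) != 0, (-1 : T) != 0, (2%:R : T) != 0 & (-(2%:R) : T) != 0].
Proof.
rewrite /= em1Z em2Z -[1 : 'Z_(m.+4)]/(1%:R) -[0 : 'Z_(m.+4)]/(0%:R).
by split; try (apply: neqZ; lia).
Qed.

Definition U m : seq 'Z_(m.+4) := 2%:R :: nseq m.+2 1.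
Definition V m : seq 'Z_(m.+4) := map -%R (U m).
Definition B m : seq 'Z_(m.+4) := U m ++ V m.

Lemma all_c_contra m (c : 'Z_(m.+4)) S : (c = 1 \/ c = -1) -> S <> [::] ->
  (size S < m.+4)%N -> (forall x, x \in S -> x = c) -> zero_sum S -> False.
Proof.
move=> hc ne sz allc.
have -> : S = nseq (size S) c.
  by apply/all_pred1P/allP => x /allc ->; rewrite /= eqxx.
rewrite /zero_sum sum_nseq.
have key : ((size S)%:R : 'Z_(m.+4)) = 0 -> False.
  move/natZ0 => /dvdn_leq; case: S ne sz {allc} => // x S _ sz H.
  by have := H isT; lia.
case: hc => -> H; apply: key => //.
by move/eqP: H; rewrite mulNrn oppr_eq0 => /eqP.
Qed.

Lemma zsU m : zero_sum (U m).
Proof.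
rewrite /zero_sum /U big_cons sum_nseq -natrD; apply/natZ0.
by have -> : (2 + m.+2 = m.+4)%N by lia.
Qed.

Lemma atomU_aux m S1 S2 : S2 <> [::] -> perm_eq (U m) (S1 ++ S2) ->
  (2%:R : 'Z_(m.+4)) \notin S1 -> S1 <> [::] -> zero_sum S1 -> False.
Proof.
move=> n2 P n1 ne1 z1.
apply: (@all_c_contra m 1 S1) => //; first by left.
  have := perm_size P; rewrite size_cat /U /= size_nseq.
  by case: S2 n2 {P} => // x S2 _ /=; lia.
move=> x xS; have : x \in U m by rewrite (perm_mem P) mem_cat xS.
rewrite /U inE mem_nseq /= => /orP [/eqP xe|/eqP //].
by move: n1; rewrite -xe xS.
Qed.

Lemma atomU m : atom (U m).
Proof.
split; first by [].
split; first exact: zsU.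
move=> [S1 [S2 [n1 [n2 [z1 [z2 P]]]]]].
have c2 : count_mem (2%:R : 'Z_(m.+4)) (U m) = 1%N.
  case: (dist m) => _ d12 _ _ _.
  rewrite /U /= count_nseq /pred1 /=; lia.
have := (permP P) (pred1 (2%:R : 'Z_(m.+4))); rewrite c2 count_cat.
case: (boolP (2%:R \in S1)) => i1; case: (boolP (2%:R \in S2)) => i2.
- move: i1 i2; rewrite -!has_pred1 !has_count => /prednK <- /prednK <-.
  by rewrite addSn addnS.
- move=> _; apply: (@atomU_aux m S2 S1) => //.
  by rewrite perm_sym perm_catC perm_sym.
- move=> _; exact: (@atomU_aux m S1 S2).
- move=> _; exact: (@atomU_aux m S1 S2).
Qed.

Lemma atomV m : atom (V m).
Proof. exact: atom_neg (atomU m). Qed.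

Lemma count_flat_nseq (T : eqType) (P : pred T) k (s : seq T) :
  count P (flatten (nseq k s)) = (k * count P s)%N.
Proof. by elim: k => //= k IH; rewrite count_cat IH mulSn. Qed.

Lemma countB m (P : pred 'Z_(m.+4)) :
  count P (B m) = addn (addn (addn (P 2%:R) (muln m.+2 (P 1))) (P (-(2%:R)))) (muln m.+2 (P (-1))).
Proof.
rewrite /B /V /U count_cat /= map_nseq /= !count_nseq. rewrite !mulSn. move: (P 2%:R) (P 1) (P (-(2%:R))) (P (-1)) => a b c d. lia.
Qed.

Lemma atom_pm m (x : 'Z_(m.+4)) : x != 0 -> atom [:: x; -x].
Proof.
move=> nx; apply: atom_small => //.
  by move=> y; rewrite !inE => /orP [] /eqP ->; rewrite ?oppr_eq0.
by rewrite /zero_sum !big_cons big_nil addr0 subrr.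
Qed.

Lemma atom_3 m (x : 'Z_(m.+4)) : x = 1 \/ x = -1 -> atom [:: x *+ 2; -x; -x].
Proof.
move=> hx; case: (nzZ m) => n1 nm1 n2 nm2.
apply: atom_small => //.
  move=> y; rewrite !inE => /or3P [] /eqP ->; case: hx => ->;
  rewrite ?opprK //.
  by rewrite mulNrn.
by rewrite /zero_sum !big_cons big_nil; ring.
Qed.

Definition F1 m : seq (seq 'Z_(m.+4)) := [:: U m; V m].
Definition F3 m : seq (seq 'Z_(m.+4)) :=
  [:: 2%:R; -(2%:R)] :: nseq m.+2 [:: 1; -1].
Definition F2 m : seq (seq 'Z_(m.+4)) :=
  [:: 1 *+ 2; -1; -1] :: [:: (-1) *+ 2; - - 1; - - 1] :: nseq m [:: 1; -1].

Lemma existence m k : (k \in [:: 2; m.+2; m.+3])%N -> in_lengths (B m) k.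
Proof.
case: (nzZ m) => n1 nm1 n2 nm2.
rewrite !inE => /or3P [] /eqP ->.
- exists (F1 m); split => //; split.
    by move=> A; rewrite !inE => /orP [] /eqP ->; [exact: atomU | exact: atomV].
  by rewrite /F1 /= cats0.
- exists (F2 m); split; first by rewrite /F2 /= size_nseq.
  split.
    move=> A; rewrite !inE => /or3P [/eqP ->|/eqP ->|].
    + by apply: atom_3; left.
    + by apply: atom_3; right.
    + by rewrite mem_nseq => /andP [_ /eqP ->]; apply: atom_pm.
  apply/permP => P; rewrite countB /F2 /= count_flat_nseq /= opprK mulNrn.
  move: (P 2%:R) (P 1) (P (-(2%:R))) (P (-1)) => a b c d; lia.
- exists (F3 m); split; first by rewrite /F3 /= size_nseq.
  split.
    move=> A; rewrite in_cons => /orP [/eqP ->|]; first exact: atom_pm.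
    by rewrite mem_nseq => /eqP ->; apply: atom_pm.
  apply/permP => P; rewrite countB /F3 /= count_flat_nseq /=.
  move: (P 2%:R) (P 1) (P (-(2%:R))) (P (-1)) => a b c d; lia.
Qed.

Definition sp m (x : 'Z_(m.+4)) : bool := (x != 1) && (x != -1).
Definition ca m (A : seq 'Z_(m.+4)) : nat := count_mem (1 : 'Z_(m.+4)) A.
Definition cb m (A : seq 'Z_(m.+4)) : nat := count_mem (-1 : 'Z_(m.+4)) A.
Definition cs m (A : seq 'Z_(m.+4)) : nat := count (@sp m) A.

Definition opts m (a b : nat) : Prop :=
  (a = m.+2 /\ b = 0%N) \/ (a = 0%N /\ b = 2%N) \/ (a = 2%N /\ b = 0%N) \/
  (a = 0%N /\ b = m.+2).

Lemma dvd_le p x : (p %| x)%N -> (0 < x)%N -> (p <= x)%N.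
Proof. by move=> h1 h2; apply: dvdn_leq. Qed.

Lemma arith m (v : 'Z_(m.+4)) a b : (v == 2%:R) || (v == -(2%:R)) ->
  (a <= m.+2)%N -> (b <= m.+2)%N ->
  ((b = 0%N /\ v + a%:R = 0) \/ (a = 0%N /\ v - b%:R = 0)) -> opts m a b.
Proof.
move=> /orP [] /eqP -> ha hb [[hb0 e]|[ha0 e]].
- left; split => //; move: e; rewrite -natrD => /natZ0 /dvd_le; lia.
- right; left; split => //; move/eqP: e; rewrite subr_eq0 => /eqP.
  by move=> e2; have := natZ_inj _ _ e2; lia.
- right; right; left; split => //; move/eqP: e; rewrite addrC subr_eq0 => /eqP.
  by move=> e2; have := natZ_inj _ _ e2; lia.
- right; right; right; split => //; move/eqP: e.
  rewrite -opprD oppr_eq0 -natrD => /eqP /natZ0 /dvd_le; lia.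
Qed.

Lemma all_size_count (T : eqType) (c : T) (S : seq T) :
  (forall x, x \in S -> x = c) -> size S = count_mem c S.
Proof.
move=> h; rewrite -count_predT; apply: eq_in_count => x /h ->.
by rewrite /= eqxx.
Qed.

Lemma pcount (T : eqType) (P : pred T) (s t : seq T) :
  perm_eq s t -> count P s = count P t.
Proof. by move/permP. Qed.

Lemma all_c_sum m (c : 'Z_(m.+4)) (R : seq 'Z_(m.+4)) :
  (forall x, x \in R -> x = c) -> \sum_(x <- R) x = c *+ count_mem c R.
Proof.
move=> h; rewrite -(all_size_count h).
have -> : R = nseq (size R) c.
  by apply/all_pred1P/allP => x /h ->; rewrite /= eqxx.
by rewrite sum_nseq size_nseq.
Qed.

Lemma classify_aux m (A : seq 'Z_(m.+4)) : atom A ->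
  (forall x, x \in A -> [|| x == 1, x == -1, x == 2%:R | x == -(2%:R)]) ->
  (ca A <= m.+2)%N -> (cb A <= m.+2)%N -> (ca A = 0%N \/ cb A = 0%N) ->
  (0 < cs A /\ (ca A = 0%N \/ cb A = 0%N) /\ (cs A = 1%N -> opts m (ca A) (cb A)))%N.
Proof.
move=> aA sub ha hb hab; have [ne [zA _]] := aA.
have [d1m d12 d1m2 dm2 dmm2] := dist m.
have dm1 : (-1 : 'Z_(m.+4)) != 1 by rewrite eq_sym.
have hsp : forall S : seq 'Z_(m.+4), {subset S <= A} -> cs S = 0%N ->
    forall x, x \in S -> (x == 1) || (x == -1).
  move=> S sS c0 x xS.
  have : ~~ has (@sp m) S by rewrite has_count /cs in c0 *; rewrite c0.
  by move/hasPn/(_ x xS); rewrite /sp negb_and !negbK.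
case: (posnP (cs A)) => [cs0|cspos].
  exfalso; have hall := hsp A (fun x h => h) cs0.
  case: hab => h0.
  - have n1 : (1 : 'Z_(m.+4)) \notin A by apply/count_memPn.
    have allc : forall x, x \in A -> x = -1.
      move=> x xA; move: (hall x xA) => /orP [/eqP e|/eqP //].
      by move: n1; rewrite -e xA.
    apply: (@all_c_contra m (-1) A) => //; first by right.
    rewrite (all_size_count allc); move: hb; rewrite /cb; lia.
  - have n1 : (-1 : 'Z_(m.+4)) \notin A by apply/count_memPn.
    have allc : forall x, x \in A -> x = 1.
      move=> x xA; move: (hall x xA) => /orP [/eqP //|/eqP e].
      by move: n1; rewrite -e xA.
    apply: (@all_c_contra m 1 A) => //; first by left.
    rewrite (all_size_count allc); move: ha; rewrite /ca; lia.
split => //; split => // cs1.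
have /hasP [v vA spv] : has (@sp m) A by rewrite has_count.
have hv : (v == 2%:R) || (v == -(2%:R)).
  case/or4P: (sub v vA) => /eqP e; move: spv; rewrite /sp e ?eqxx ?andbF //.
  by rewrite orbT.
have P := perm_to_rem vA; set R := rem v A in P.
have sR : {subset R <= A} by move=> x xR; rewrite (perm_mem P) in_cons xR orbT.
have csR : cs R = 0%N.
  have := cs1; rewrite /cs (pcount _ P) /=.
  by rewrite spv add1n => /eqP; rewrite eqSS => /eqP.
move: spv; rewrite /sp => /andP [v1 vm1].
have caR : ca R = ca A by rewrite /ca (pcount _ P) /= (negbTE v1).
have cbR : cb R = cb A by rewrite /cb (pcount _ P) /= (negbTE vm1).
have hR := hsp R sR csR.
have zs : v + \sum_(x <- R) x = 0.
  by move: zA; rewrite /zero_sum (sum_perm P) big_cons.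
apply: (arith hv ha hb); case: hab => h0; [right | left]; split => //.
- have allc : forall x, x \in R -> x = -1.
    move=> x xR; move: (hR x xR) => /orP [/eqP e|/eqP //].
    have : (1 : 'Z_(m.+4)) \in R by rewrite -e.
    by move/count_memPn => /=; rewrite -/(ca R) caR h0.
  by move: zs; rewrite (all_c_sum allc) -/(cb R) cbR mulNrn.
- have allc : forall x, x \in R -> x = 1.
    move=> x xR; move: (hR x xR) => /orP [/eqP //|/eqP e].
    have : (-1 : 'Z_(m.+4)) \in R by rewrite -e.
    by move/count_memPn => /=; rewrite -/(cb R) cbR h0.
  by move: zs; rewrite (all_c_sum allc) -/(ca R) caR.
Qed.

Lemma classify m (A : seq 'Z_(m.+4)) : atom A ->
  (forall x, x \in A -> [|| x == 1, x == -1, x == 2%:R | x == -(2%:R)]) ->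
  (ca A <= m.+2)%N -> (cb A <= m.+2)%N ->
  (ca A = 1%N /\ cb A = 1%N /\ cs A = 0%N) \/
  (0 < cs A /\ (ca A = 0%N \/ cb A = 0%N) /\ (cs A = 1%N -> opts m (ca A) (cb A)))%N.
Proof.
move=> aA sub ha hb.
have [d1m d12 d1m2 dm2 dmm2] := dist m.
have dm1 : (-1 : 'Z_(m.+4)) != 1 by rewrite eq_sym.
case: (boolP ((1 : 'Z_(m.+4)) \in A)) => i1; case: (boolP ((-1 : 'Z_(m.+4)) \in A)) => i2.
- left.
  have P1 := perm_to_rem i1.
  have i2' : (-1 : 'Z_(m.+4)) \in rem 1 A.
    by move: i2; rewrite (perm_mem P1) in_cons (negbTE dm1).
  have P : perm_eq A ([:: 1; -1] ++ rem (-1) (rem 1 A)).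
    by apply: (perm_trans P1); rewrite /= perm_cons; apply: perm_to_rem.
  have zs : zero_sum [:: (1 : 'Z_(m.+4)); -1].
    by rewrite /zero_sum !big_cons big_nil addr0 subrr.
  case: (atom_split aA P zs) => // e; rewrite e cats0 in P.
  rewrite /ca /cb /cs !(pcount _ P) /= /sp /= eqxx (negbTE dm1) (negbTE d1m).
  by [].
all: right; apply: classify_aux => //.
- by right; apply/count_memPn.
- by left; apply/count_memPn.
- by left; apply/count_memPn.
Qed.

Lemma sumn_mem (T : eqType) (f : T -> nat) F A :
  A \in F -> (f A <= sumn (map f F))%N.
Proof.
elim: F => //= B F IH; rewrite in_cons => /orP [/eqP <- | /IH]; lia.
Qed.

Lemma sumn_split (T : Type) (p : pred T) (f : T -> nat) F :
  sumn (map f F) = (sumn (map f (filter p F)) + sumn (map f (filter (predC p) F)))%N.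
Proof. by elim: F => //= A F ->; case: (p A) => /=; lia. Qed.

Lemma sumn_one (T : eqType) (f : T -> nat) S :
  (forall A, A \in S -> f A = 1%N) -> sumn (map f S) = size S.
Proof.
elim: S => //= A S IH h; rewrite h ?mem_head // IH // => B BS.
by apply: h; rewrite in_cons BS orbT.
Qed.

Lemma sumn_zero (T : eqType) (f : T -> nat) S :
  (forall A, A \in S -> f A = 0%N) -> sumn (map f S) = 0%N.
Proof.
elim: S => //= A S IH h; rewrite h ?mem_head // IH // => B BS.
by apply: h; rewrite in_cons BS orbT.
Qed.

Lemma memB m x : x \in B m -> [|| x == 1, x == -1, x == 2%:R | x == -(2%:R)].
Proof.
rewrite /B /V /U mem_cat /= map_nseq !in_cons !mem_nseq /=.
by case: (x == 1); case: (x == -1); case: (x == 2%:R); case: (x == -(2%:R)); rewrite /= ?andbF ?orbF.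
Qed.

Lemma countsB m : [/\ ca (B m) = m.+2, cb (B m) = m.+2 & cs (B m) = 2%N].
Proof.
have [d1m d12 d1m2 dm2 dmm2] := dist m.
rewrite /ca /cb /cs !countB /= /sp.
rewrite ![(2%:R : 'Z_(m.+4)) == _]eq_sym ![(-(2%:R) : 'Z_(m.+4)) == _]eq_sym.
rewrite ![(-1 : 'Z_(m.+4)) == 1]eq_sym.
rewrite (negbTE d1m) (negbTE d12) (negbTE d1m2) (negbTE dm2) (negbTE dmm2) !eqxx /=.
split; lia.
Qed.

Lemma lengths_sub m k : in_lengths (B m) k -> k = 2%N \/ k = m.+2 \/ k = m.+3.
Proof.
move=> [F [szF [aF P]]].
have [cAB cBB cSB] := countsB m.
have tot : forall f : pred 'Z_(m.+4), count f (B m) = sumn (map (count f) F).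
  by move=> f; rewrite (pcount _ P) count_flatten.
have tA : sumn (map (@ca m) F) = m.+2 by rewrite -[RHS]cAB /ca tot.
have tB : sumn (map (@cb m) F) = m.+2 by rewrite -[RHS]cBB /cb tot.
have tS : sumn (map (@cs m) F) = 2%N by rewrite -[RHS]cSB /cs tot.
have cls : forall A, A \in F ->
  (ca A = 1%N /\ cb A = 1%N /\ cs A = 0%N) \/
  (0 < cs A /\ (ca A = 0%N \/ cb A = 0%N) /\ (cs A = 1%N -> opts m (ca A) (cb A)))%N.
  move=> A AF; apply: classify; first exact: aF.
  - move=> x xA; apply: memB; rewrite (perm_mem P).
    have : (0 < count_mem x A)%N by rewrite -has_count has_pred1.
    have := sumn_mem (count (pred1 x)) AF; rewrite -count_flatten.
    by rewrite -has_pred1 has_count => h1 h2; apply: leq_trans h2 h1.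
  - by rewrite -tA; apply: sumn_mem.
  - by rewrite -tB; apply: sumn_mem.
pose p := fun A : seq 'Z_(m.+4) => cs A == 0%N.
have sz : k = (size (filter p F) + size (filter (predC p) F))%N.
  by rewrite -szF !size_filter count_predC.
have hP : forall A, A \in filter p F -> ca A = 1%N /\ cb A = 1%N /\ cs A = 0%N.
  move=> A; rewrite mem_filter => /andP [/eqP c0 AF].
  by case: (cls A AF) => // [[h _]]; rewrite c0 in h.
rewrite (sumn_split p) (@sumn_one _ _ (filter p F)) in tA;
  last by move=> A /hP [].
rewrite (sumn_split p) (@sumn_one _ _ (filter p F)) in tB;
  last by move=> A /hP [_ []].
rewrite (sumn_split p) (@sumn_zero _ _ (filter p F)) in tS;
  last by move=> A /hP [_ [_ ]].
have hQ : forall A, A \in filter (predC p) F ->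
  (0 < cs A /\ (ca A = 0%N \/ cb A = 0%N) /\ (cs A = 1%N -> opts m (ca A) (cb A)))%N.
  move=> A; rewrite mem_filter => /andP [c0 AF].
  case: (cls A AF) => // [[_ [_ e]]]; by move: c0; rewrite /= /p e.
move: hQ tA tB tS sz; rewrite /opts.
case: (filter (predC p) F) => [|A1 [|A2 [|A3 Q]]] /= hQ.
- lia.
- have := hQ A1 (mem_head _ _); lia.
- have := hQ A1 (mem_head _ _); have := hQ A2 ltac:(by rewrite !inE eqxx orbT); lia.
- have := hQ A1 (mem_head _ _); have := hQ A2 ltac:(by rewrite !inE eqxx orbT).
  have := hQ A3 ltac:(by rewrite !inE eqxx !orbT); lia.
Qed.

Local Close Scope ring_scope.

Theorem lemma4p2 (n : nat) (hn : (4 <= n)%N) :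
  in_system_of_sets [the zmodType of 'Z_n]
    (fun k => k \in [:: 2; n - 2; n - 1]%N).
Proof.
case: n hn => [|[|[|[|m]]]] // _.
exists (B m); split.
  have [_ [zU _]] := atomU m; have [_ [zV _]] := atomV m.
  by rewrite /zero_sum /B big_cat /= zU zV GRing.addr0.
have e2 : (m.+4 - 2 = m.+2)%N by lia.
have e1 : (m.+4 - 1 = m.+3)%N by lia.
move=> k; rewrite e1 e2; split.
- move/lengths_sub => [->|[->|->]]; by rewrite !inE eqxx ?orbT.
- exact: existence.
Qed.
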